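(* Let $P$ be a finite poset and $X:P\to\mathcal{P}_{<\infty}$ a diagram of finite posets. If $P$ has a maximum element $p$, then $\operatorname{\underline{hocolim}} X$ collapses to $X_p$ (viewed as a subposet of $\operatorname{\underline{hocolim}} X$). In particular, they are weak equivalent.
   Context: $P$ is viewed as a category with a unique arrow $p\to q$ iff $p\le q$; $\mathcal{P}_{<\infty}$ is the category of finite posets and order-preserving maps. Write $X_p=X(p)$, $f_{pq}=X(p\to q)$. $\operatorname{\underline{hocolim}} X$ is the poset on $\coprod_{p}X_p$ keeping the order within each $X_p$ and, for $x\in X_p$, $y\in X_q$, $p\le q$, setting $x\le y$ iff $f_{pq}(x)\le y$ in $X_q$. For $x$ in a finite poset $Y$: $\hat U_x=\{y<x\}$, $\hat F_x=\{y>x\}$. $x$ is an up beat point if $\hat F_x$ has a minimum, a down beat point if $\hat U_x$ has a maximum. A finite poset is contractible if it can be reduced to one point by removing beat points one at a time. $x$ is a down (resp. up) weak point if $\hat U_x$ (resp. $\hat F_x$) is contractible; removing a weak point is an elementary collapse, and $Y$ collapses to $Z$ if $Z$ is obtained from $Y$ by a sequence of elementary collapses. Two finite posets are weak equivalent if their order complexes are homotopy equivalent. *)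

(* Defs.v *)
From HB Require Import structures.
From mathcomp Require Import all_boot all_order all_algebra.
From mathcomp Require Import all_classical all_reals all_analysis.
Import Order.TTheory GRing.Theory Num.Theory.
Import numFieldNormedType.Exports.

Set Implicit Arguments.
Unset Strict Implicit.
Unset Printing Implicit Defensive.

Local Open Scope classical_set_scope.
Local Open Scope ring_scope.

(* Finite posets as subsets of a finite ambient type T carrying an order le.  *)
Section FinitePosetNotions.
Variables (T : finType) (le : rel T).

Definition ltp (x y : T) : bool := le x y && (x != y).

Definition Uhat (S : {set T}) (x : T) : {set T} := [set y in S | ltp y x].
Definition Fhat (S : {set T}) (x : T) : {set T} := [set y in S | ltp x y].

Definition has_max (A : {set T}) : Prop :=
  exists2 m, m \in A & forall y, y \in A -> le y m.
Definition has_min (A : {set T}) : Prop :=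
  exists2 m, m \in A & forall y, y \in A -> le m y.

Definition up_beat_point (S : {set T}) (x : T) : Prop :=
  x \in S /\ has_min (Fhat S x).
Definition down_beat_point (S : {set T}) (x : T) : Prop :=
  x \in S /\ has_max (Uhat S x).
Definition beat_point (S : {set T}) (x : T) : Prop :=
  up_beat_point S x \/ down_beat_point S x.

Inductive contractible : {set T} -> Prop :=
  | contractible_point (x : T) : contractible [set x]
  | contractible_step (S : {set T}) (x : T) :
      beat_point S x -> contractible (S :\ x) -> contractible S.

Definition down_weak_point (S : {set T}) (x : T) : Prop :=
  x \in S /\ contractible (Uhat S x).
Definition up_weak_point (S : {set T}) (x : T) : Prop :=
  x \in S /\ contractible (Fhat S x).
Definition weak_point (S : {set T}) (x : T) : Prop :=
  down_weak_point S x \/ up_weak_point S x.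

Inductive collapses : {set T} -> {set T} -> Prop :=
  | collapses_refl (S : {set T}) : collapses S S
  | collapses_step (S Z : {set T}) (x : T) :
      weak_point S x -> collapses (S :\ x) Z -> collapses S Z.

(* Geometric realization of the order complex of the subposet S, as a
   subspace of R^T (product = Euclidean topology): the convex combinations
   of points of S whose support is a chain. *)
Definition order_complex_realization (R : realType) (S : {set T})
  : set {ptws T -> R} :=
  [set f | (forall x, 0 <= f x) /\ (\sum_(x : T) f x = 1) /\
           (forall x, f x != 0 -> x \in S) /\
           (forall x y, f x != 0 -> f y != 0 -> le x y || le y x)].

End FinitePosetNotions.

Arguments order_complex_realization {T} le R S.

Definition homotopic_on (R : realType) (U V : topologicalType)
  (A : set U) (B : set V) (f g : U -> V) : Prop :=
  exists H : R * U -> V,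
    {within `[0, 1] `*` A, continuous H} /\
    (forall t a, t \in `[0, 1] -> A a -> B (H (t, a))) /\
    (forall a, A a -> H (0, a) = f a) /\
    (forall a, A a -> H (1, a) = g a).

Definition homotopy_equivalent (R : realType) (U V : topologicalType)
  (A : set U) (B : set V) : Prop :=
  exists (f : U -> V) (g : V -> U),
    {within A, continuous f} /\ (forall a, A a -> B (f a)) /\
    {within B, continuous g} /\ (forall b, B b -> A (g b)) /\
    homotopic_on R A A (g \o f) id /\ homotopic_on R B B (f \o g) id.

Arguments homotopic_on R {U V} A B f g.
Arguments homotopy_equivalent R {U V} A B.

Definition weak_equivalent (T1 T2 : finType) (le1 : rel T1) (le2 : rel T2)
  (S1 : {set T1}) (S2 : {set T2}) : Prop :=
  forall R : realType,
    homotopy_equivalent R (order_complex_realization le1 R S1)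
                          (order_complex_realization le2 R S2).

(* dmap p q is f_pq; it is only meaningful (and constrained) when p <= q.    *)
Unset Implicit Arguments.
Record diagram (d : Order.disp_t) (P : finPOrderType d) := Diagram {
  dobj : P -> finType;
  dle : forall p : P, rel (dobj p);
  dmap : forall p q : P, dobj p -> dobj q;
  dle_refl : forall p, reflexive (dle p);
  dle_anti : forall p, antisymmetric (dle p);
  dle_trans : forall p, transitive (dle p);
  dmap_mono : forall p q : P, (p <= q)%O ->
    forall x y, dle p x y -> dle q (dmap p q x) (dmap p q y);
  dmap_id : forall (p : P) (x : dobj p), dmap p p x = x;
  dmap_comp : forall p q r : P, (p <= q)%O -> (q <= r)%O ->
    forall x : dobj p, dmap q r (dmap p q x) = dmap p r x
}.
Set Implicit Arguments.
Arguments diagram {d} P.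
Arguments Diagram {d P}.
Arguments dobj {d P} _ _.
Arguments dle {d P} _ _.
Arguments dmap {d P} _ _ _.

Section Hocolim.
Variables (d : Order.disp_t) (P : finPOrderType d) (X : diagram P).

Definition hocolim_carrier : finType := {p : P & dobj X p}.

Definition hocolim_le : rel hocolim_carrier :=
  fun x y => (tag x <= tag y)%O &&
             dle X (tag y) (dmap X (tag x) (tag y) (tagged x)) (tagged y).

Definition fiber (p : P) : {set hocolim_carrier} := [set x | tag x == p].

End Hocolim.

Arguments hocolim_carrier {d P} X.
Arguments hocolim_le {d P} X.
Arguments fiber {d P} X p.

(* Main.v *)
Require Import Defs.
From HB Require Import structures.
From mathcomp Require Import all_boot all_order all_algebra.
From mathcomp Require Import all_classical all_reals all_analysis.

Module Mc.
Import Order.TTheory GRing.Theory Num.Theory.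

Section Comb.
Variables (T : finType) (le : rel T).
Hypotheses (le_refl : reflexive le) (le_anti : antisymmetric le)
  (le_trans : transitive le).

Lemma ltp_le x y : ltp le x y -> le x y.
Proof. by case/andP. Qed.

Lemma ltp_trans x y z : ltp le x y -> ltp le y z -> ltp le x z.
Proof.
rewrite /ltp => /andP[lxy nxy] /andP[lyz nyz]; rewrite (le_trans _ _ _ lxy lyz) /=.
apply/eqP => exz; subst z; move/negP: nxy; apply.
by rewrite (@le_anti x y) ?lxy ?lyz.
Qed.

Lemma exists_maximal (A : {set T}) x0 : x0 \in A ->
  exists2 x, x \in A & forall y, y \in A -> ~~ ltp le x y.
Proof.
move=> Ax0.
case: (@arg_maxnP _ x0 (fun x => x \in A) (fun x => #|[set y in A | le y x]|) Ax0)
  => x Ax Hmax.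
exists x => // y Ay; apply/negP => lxy.
have := Hmax y Ay; apply/negP; rewrite -ltnNge.
apply: proper_card; apply/properP; split.
  apply/fintype.subsetP => z; rewrite !inE => /andP[Az lzx]; rewrite Az /=.
  by apply: (le_trans x) => //; case/andP: lxy.
exists y; first by rewrite inE Ay le_refl.
rewrite inE Ay /=; apply/negP => lyx; move/andP: lxy => [lxy /negP]; apply.
by rewrite (@le_anti x y) ?lxy ?lyx.
Qed.
End Comb.

Lemma exists_minimal (T : finType) (le : rel T) :
  reflexive le -> antisymmetric le -> transitive le ->
  forall (A : {set T}) x0, x0 \in A ->
  exists2 x, x \in A & forall y, y \in A -> ~~ ltp le y x.
Proof.
move=> hr ha ht A x0 Ax0.
have hr' : reflexive (fun x y => le y x) by move=> x; exact: hr.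
have ha' : antisymmetric (fun x y => le y x).
  by move=> x y /andP[a b]; apply: ha; rewrite a b.
have ht' : transitive (fun x y => le y x) by move=> x y z a b; exact: ht _ _ _ b a.
have [x Ax H] := @exists_maximal _ _ hr' ha' ht' A x0 Ax0.
exists x => // y Ay; have := H y Ay; rewrite /ltp eq_sym; exact.
Qed.

Section Comb2.
Variables (T : finType) (le : rel T).
Hypotheses (le_refl : reflexive le) (le_anti : antisymmetric le)
  (le_trans : transitive le).

Lemma contractible_min n : forall (S : {set T}) m, #|S| <= n -> m \in S ->
  (forall y, y \in S -> le m y) -> contractible le S.
Proof.
elim: n => [|n IH] S m cS mS minS.
  by move: cS; rewrite leqn0 => /eqP/cards0_eq Sx; rewrite Sx inE in mS.
have [S1|] := eqVneq (S :\ m) finset.set0.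
  have -> : S = [set m].
    apply/setP => z; rewrite inE; apply/idP/eqP => [zS|->//].
    apply/eqP; apply: contraT => nz; have : z \in S :\ m by rewrite !inE nz zS.
    by rewrite S1 finset.in_set0.
  exact: contractible_point.
case/set0Pn => y0 y0S.
have [y yS ymin] := @exists_minimal _ le le_refl le_anti le_trans _ _ y0S.
move: (yS); rewrite !inE => /andP[ym yS'].
apply: (@contractible_step _ _ S y).
  right; split => //; exists m.
    by rewrite !inE mS /ltp (minS y yS') eq_sym ym.
  move=> z; rewrite !inE => /andP[zS lzy].
  have [->//|zm] := eqVneq z m.
  by have := ymin z; rewrite !inE zm zS lzy => /(_ isT).
apply: (IH _ m).
- by move: cS; rewrite (cardsD1 y) yS'.
- by rewrite !inE mS eq_sym ym.
- by move=> z; rewrite !inE => /andP[_ zS]; exact: minS.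
Qed.

Variables (F : {set T}) (r : T -> T).
Hypotheses (rF : forall x, r x \in F) (le_r : forall x, le x (r x))
  (r_up : forall x y, y \in F -> le x y -> le (r x) y).

Lemma collapse_gen n : forall S : {set T}, #|S| <= n -> F \subset S ->
  collapses le S F.
Proof.
elim: n => [|n IH] S cS FS.
  have S0 : S = finset.set0 by apply/cards0_eq; move: cS; rewrite leqn0 => /eqP.
  have -> : F = S by apply/eqP; rewrite finset.eqEsubset FS S0 finset.sub0set.
  exact: collapses_refl.
case: (boolP (S \subset F)) => [SF|/fintype.subsetPn [x0 x0S x0F]].
  have -> : F = S by apply/eqP; rewrite finset.eqEsubset FS SF.
  exact: collapses_refl.
have x0D : x0 \in S :\: F by rewrite inE x0F x0S.
have [x xD xmax] := @exists_maximal _ le le_refl le_anti le_trans _ _ x0D.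
move: (xD); rewrite inE => /andP[xF xS].
apply: (@collapses_step _ _ S F x).
  right; split => //.
  apply: (@contractible_min #|Fhat le S x| _ (r x)) => //.
    rewrite !inE (fintype.subsetP FS _ (rF x)) /ltp le_r /=.
    by apply: contraNneq xF => ->.
  move=> y; rewrite !inE => /andP[yS lxy].
  have yF : y \in F.
    apply: contraT => yF; have := xmax y; rewrite !inE yF yS lxy.
    by move=> /(_ isT).
  by apply: r_up => //; exact: ltp_le.
apply: IH.
  by move: cS; rewrite (cardsD1 x) xS.
apply/fintype.subsetP => z zF; rewrite !inE (fintype.subsetP FS _ zF) andbT.
by apply: contraTneq zF => ->.
Qed.
End Comb2.

End Mc.
Import Mc.

Module Md.
Import Order.TTheory GRing.Theory Num.Theory.
Import numFieldNormedType.Exports.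
Local Open Scope ring_scope.

Lemma sum_neq0_ex (R : numDomainType) (T : finType) (P : pred T) (g : T -> R) :
  \sum_(x | P x) g x != 0 -> exists x, P x && (g x != 0).
Proof.
move=> H; apply/existsP; apply: contraNT H; rewrite negb_exists => /forallP H.
rewrite big1 // => x Px; have := H x; rewrite Px /= negbK => /eqP.
done.
Qed.

Section Real.
Variables (R : realType) (T : finType) (le : rel T).
Hypotheses (le_refl : reflexive le) (le_anti : antisymmetric le)
  (le_trans : transitive le).
Variables (F : {set T}) (r : T -> T).
Hypotheses (rF : forall x, r x \in F) (le_r : forall x, le x (r x))
  (r_mono : forall x y, le x y -> le (r x) (r y))
  (r_fix : forall x, x \in F -> r x = x).

Definition push (f : {ptws T -> R}) : {ptws T -> R} :=
  fun y => \sum_(x | r x == y) f x.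
Definition Am (f : T -> R) x := \sum_(y | ltp le x y) f y.
Definition mv (s : R) (f : T -> R) x := Num.min (Num.max (s - Am f x) 0) (f x).
Definition Hh (z : R * {ptws T -> R}) : {ptws T -> R} :=
  fun y => z.2 y - mv (1 - z.1) z.2 y + \sum_(x | r x == y) mv (1 - z.1) z.2 x.

Local Notation rl S := (order_complex_realization le R S).

Lemma rlP S f : rl S f <-> [/\ (forall x, 0 <= f x), \sum_x f x = 1,
  (forall x, f x != 0 -> x \in S) &
  (forall x y, f x != 0 -> f y != 0 -> le x y || le y x)].
Proof.
rewrite /order_complex_realization /=.
by split; [case=> a [b [c d]]; split|case=> a b c d; split].
Qed.

Lemma sum_partition (g : T -> R) :
  \sum_y \sum_(x | r x == y) g x = \sum_x g x.
Proof. by rewrite [RHS](partition_big r xpredT). Qed.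

Lemma push_rl f : rl (finset.setT : {set T}) f -> rl F (push f).
Proof.
case/rlP => f0 f1 _ fch; apply/rlP; split.
- by move=> y; apply: sumr_ge0.
- by rewrite sum_partition.
- move=> y /sum_neq0_ex [x /andP[/eqP <- _]]; exact: rF.
- move=> y1 y2 /sum_neq0_ex [x1 /andP[/eqP <- h1]] /sum_neq0_ex [x2 /andP[/eqP <- h2]].
  by case/orP: (fch _ _ h1 h2) => /r_mono ->; rewrite ?orbT.
Qed.

Lemma id_rl f : rl F f -> rl (finset.setT : {set T}) f.
Proof. by case/rlP => a b c d; apply/rlP; split => // x; rewrite finset.in_setT. Qed.

Lemma push_fix f : rl F f -> push f = f.
Proof.
case/rlP => f0 f1 fs _; apply: functional_extensionality_dep => y.
rewrite /push; case: (boolP (y \in F)) => yF.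
  rewrite (bigD1 y) ?r_fix //= big1 ?addr0 // => x /andP[/eqP rxy xy].
  apply/eqP; apply: contraTT xy => /fs xF; by rewrite -rxy r_fix // eqxx.
have -> : f y = 0 by apply/eqP; apply: contraNT yF => /fs.
by rewrite big1 // => x /eqP rxy; move: yF; rewrite -rxy rF.
Qed.

Lemma Am_ge0 f x : (forall x, 0 <= f x) -> 0 <= Am f x.
Proof. by move=> f0; apply: sumr_ge0. Qed.

Lemma Am_lt f x y : (forall x, 0 <= f x) -> ltp le x y -> Am f y + f y <= Am f x.
Proof.
move=> f0 lxy; rewrite /Am [X in _ <= X](bigD1 y) //=. rewrite addrC lerD2r.
rewrite [X in X <= _]big_mkcond [X in _ <= X]big_mkcond /=; apply: ler_sum => z _.
case: ifP => [lyz|_]; last by case: ifP.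
have lxz : ltp le x z by exact: (@ltp_trans _ le le_anti le_trans _ _ _ lxy lyz).
rewrite lxz /=; case: eqVneq => // zy; subst z.
by move: lyz; rewrite /ltp eqxx andbF.
Qed.

Lemma Am_le1 f x : (forall x, 0 <= f x) -> \sum_x f x = 1 -> Am f x + f x <= 1.
Proof.
move=> f0 f1; rewrite -f1 (bigD1 x) //= addrC lerD2r /Am.
rewrite [X in _ <= X]big_mkcond [X in X <= _]big_mkcond /=; apply: ler_sum => z _.
case: ifP => lxz; last by case: ifP.
rewrite ifT //; apply: contraTneq lxz => ->.
by rewrite /ltp eqxx andbF.
Qed.

Lemma mv_ge0 s f x : 0 <= f x -> 0 <= mv s f x.
Proof. by move=> h; rewrite /mv le_min le_max lexx orbT h. Qed.

Lemma mv_le s f x : mv s f x <= f x.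
Proof. by rewrite /mv ge_min lexx orbT. Qed.

Lemma mv_neq0 s f x : 0 <= f x -> mv s f x != 0 -> (f x != 0) && (Am f x < s).
Proof.
move=> h; rewrite neq_lt ltNge mv_ge0 //= lt_min lt_max ltxx orbF.
rewrite subr_gt0 => /andP[-> hf]; by rewrite andbT gt_eqF.
Qed.

Lemma stay_neq0 s f x : 0 <= f x -> f x - mv s f x != 0 ->
  (f x != 0) && (s < Am f x + f x).
Proof.
move=> h; rewrite subr_eq0 => hne.
have hlt : mv s f x < f x by rewrite lt_neqAle eq_sym hne mv_le.
apply/andP; split.
  by apply: contraTneq hlt => ->; rewrite -leNgt mv_ge0.
move: hlt; rewrite /mv gt_min ltxx orbF gt_max => /andP[+ _].
by rewrite ltrBlDl addrC.
Qed.


Lemma Hh_nz t f y : Hh (t, f) y != 0 ->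
  (f y - mv (1 - t) f y != 0) \/ exists x, r x = y /\ mv (1 - t) f x != 0.
Proof.
rewrite /Hh /=; case: (eqVneq (f y - mv (1 - t) f y) 0) => [->|]; last by left.
rewrite add0r => /sum_neq0_ex [x /andP[/eqP rx mx]]; right; by exists x.
Qed.

Lemma stay_moved s f x y : (forall x, 0 <= f x) ->
  (forall x y, f x != 0 -> f y != 0 -> le x y || le y x) ->
  f y - mv s f y != 0 -> mv s f x != 0 -> le y x.
Proof.
move=> f0 fch hy hx.
have /andP[fy sy] := stay_neq0 _ _ _ (f0 y) hy.
have /andP[fx ax] := mv_neq0 _ _ _ (f0 x) hx.
case/orP: (fch _ _ fx fy) => // lxy.
case: (eqVneq x y) => [->|nxy]; first exact: le_refl.
have lt : ltp le x y by rewrite /ltp lxy nxy.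
have := lt_le_trans (lt_trans ax sy) (Am_lt _ _ _ f0 lt).
by rewrite ltxx.
Qed.

Lemma Hh_rl t f : 0 <= t <= 1 -> rl (finset.setT : {set T}) f ->
  rl (finset.setT : {set T}) (Hh (t, f)).
Proof.
move=> _ /rlP [f0 f1 _ fch]; apply/rlP; split.
- move=> y; rewrite /Hh /=; apply: addr_ge0.
    by rewrite subr_ge0 mv_le.
  by apply: sumr_ge0 => x _; apply: mv_ge0; apply: f0.
- rewrite /Hh /= big_split /= sum_partition sumrB subrK; exact: f1.
- by move=> x _; rewrite finset.in_setT.
- move=> y1 y2 /Hh_nz [st1|[x1 [<- m1]]] /Hh_nz [st2|[x2 [<- m2]]].
  + have /andP[h1 _] := stay_neq0 _ _ _ (f0 y1) st1.
    have /andP[h2 _] := stay_neq0 _ _ _ (f0 y2) st2.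
    exact: fch.
  + by rewrite (le_trans _ _ _ (stay_moved _ _ _ _ f0 fch st1 m2) (le_r x2)).
  + by rewrite (le_trans _ _ _ (stay_moved _ _ _ _ f0 fch st2 m1) (le_r x1)) orbT.
  + have /andP[h1 _] := mv_neq0 _ _ _ (f0 x1) m1.
    have /andP[h2 _] := mv_neq0 _ _ _ (f0 x2) m2.
    by case/orP: (fch _ _ h1 h2) => /r_mono ->; rewrite ?orbT.
Qed.

Lemma mv1 f x : (forall x, 0 <= f x) -> \sum_x f x = 1 -> mv 1 f x = f x.
Proof.
move=> f0 f1; rewrite /mv min_r //; rewrite le_max; apply/orP; left.
by rewrite lerBrDl (Am_le1 _ _ f0 f1).
Qed.

Lemma mv0 f x : (forall x, 0 <= f x) -> mv 0 f x = 0.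
Proof.
move=> f0; rewrite /mv sub0r max_r ?min_l //.
by rewrite oppr_le0 (Am_ge0 _ _ f0).
Qed.

Lemma Hh0 f : rl (finset.setT : {set T}) f -> Hh (0, f) = push f.
Proof.
case/rlP => f0 f1 _ _; apply: functional_extensionality_dep => y.
rewrite /Hh /push /= subr0 mv1 // subrr add0r.
by apply: eq_bigr => x _; rewrite mv1.
Qed.

Lemma Hh1 f : (forall x, 0 <= f x) -> Hh (1, f) = f.
Proof.
move=> f0; apply: functional_extensionality_dep => y.
rewrite /Hh /= subrr mv0 // subr0 big1 ?addr0 // => x _; exact: mv0.
Qed.

End Real.

End Md.
Import Md.

Module Me.
Import Order.TTheory GRing.Theory Num.Theory.
Import numFieldNormedType.Exports.
Local Open Scope classical_set_scope.
Local Open Scope ring_scope.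

Lemma ptws_cont (R : realType) (Y : topologicalType) (T : Type)
  (h : Y -> {ptws T -> R}) :
  (forall i, continuous (fun y => h y i)) -> continuous h.
Proof.
move=> hc y; apply/cvg_sup => i; apply/cvg_image => //.
  by rewrite eqEsubset; split=> v // _; exists (fun _ => v).
move=> B /= nB.
exists ((fun g : T -> R => g i) @^-1` B).
  by apply: hc.
by rewrite eqEsubset; split=> [v [g Bg <-]|v Bv] //; exists (fun _ => v).
Qed.

Lemma cmin (R : realType) (Y : topologicalType) (a b : Y -> R) :
  continuous a -> continuous b -> continuous (fun y => Num.min (a y) (b y)).
Proof. move=> ha hb y; exact: (@continuous_min R Y a b y (ha y) (hb y)). Qed.
Lemma cmax (R : realType) (Y : topologicalType) (a b : Y -> R) :
  continuous a -> continuous b -> continuous (fun y => Num.max (a y) (b y)).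
Proof. move=> ha hb y; exact: (@continuous_max R Y a b y (ha y) (hb y)). Qed.
Lemma cB (R : realType) (Y : topologicalType) (a b : Y -> R) :
  continuous a -> continuous b -> continuous (fun y => a y - b y).
Proof. move=> ha hb y; exact: (@cvgB _ _ _ _ _ a b _ _ (ha y) (hb y)). Qed.
Lemma cD (R : realType) (Y : topologicalType) (a b : Y -> R) :
  continuous a -> continuous b -> continuous (fun y => a y + b y).
Proof. move=> ha hb y; exact: (@cvgD _ _ _ _ _ a b _ _ (ha y) (hb y)). Qed.

Lemma ccst (R : realType) (Y : topologicalType) (c : R) : continuous (fun _ : Y => c).
Proof. by move=> y; exact: cvg_cst. Qed.

Section C.
Variables (R : realType) (T : finType).
Local Notation Z := (R * {ptws T -> R})%type.

Lemma proj_cont (i : T) :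
  continuous (fun f : {ptws T -> R} => f i).
Proof. exact: (@proj_continuous T (fun _ => R^o) i). Qed.

Lemma c_snd (y : T) : continuous (fun z : Z => z.2 y).
Proof.
move=> z; apply: (@continuous_comp Z {ptws T -> R} R^o snd (fun f => f y)).
  exact: cvg_snd.
exact: proj_cont.
Qed.

Lemma c_fst : continuous (fun z : Z => z.1).
Proof. move=> z; exact: cvg_fst. Qed.

Lemma c_sum (Y : topologicalType) (P : pred T) (g : T -> Y -> R^o) :
  (forall x, continuous (g x)) -> continuous (fun z => \sum_(x | P x) g x z).
Proof.
move=> hg; apply: continuous_big => //.
exact: add_continuous.
Qed.

Variables (le : rel T) (r : T -> T).

Lemma c_mv x : continuous (fun z : Z => @mv R T le (1 - z.1) z.2 x).
Proof.
rewrite /mv. apply: cmin; last first. Time exact: (c_snd x).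
Time apply: cmax; last first. Time exact: ccst.
Time apply: cB; last first. Time apply: c_sum => y. Time exact: (c_snd y).
Time apply: cB; last first. Time exact: c_fst. Time exact: ccst.
Qed.

Lemma c_Hh : continuous (@Hh R T le r : Z -> {ptws T -> R}).
Proof.
apply: ptws_cont => y; rewrite /Hh.
apply: cD; last first. apply: c_sum => x0. exact: (c_mv x0).
apply: cB; last first. exact: (c_mv y).
exact: (c_snd y).
Qed.

Lemma c_push : continuous (@push R T r).
Proof. apply: ptws_cont => y; apply: c_sum => x. exact: (proj_cont x). Qed.

End C.

End Me.
Import Me.

Module Mg.
Import Order.TTheory GRing.Theory Num.Theory.
Import numFieldNormedType.Exports.
Local Open Scope classical_set_scope.
Local Open Scope ring_scope.

Lemma weq_gen (T : finType) (le : rel T)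
  (le_refl : reflexive le) (le_anti : antisymmetric le)
  (le_trans : transitive le) (F : {set T}) (r : T -> T)
  (rF : forall x, r x \in F) (le_r : forall x, le x (r x))
  (r_mono : forall x y, le x y -> le (r x) (r y))
  (r_fix : forall x, x \in F -> r x = x) :
  weak_equivalent le le (finset.setT : {set T}) F.
Proof.
move=> R.
exists (@push R T r), id; split; [|split; [|split; [|split; [|split]]]].
- by apply: continuous_subspaceT; exact: c_push.
- by move=> a; apply: push_rl.
- by apply: continuous_subspaceT => ?; exact: cvg_id.
- by move=> a; apply: id_rl.
- exists (@Hh R T le r); split; [|split; [|split]].
  + by apply: continuous_subspaceT; exact: c_Hh.
  + move=> t a; rewrite in_itv /= => /andP[t0 t1] Aa.
    by apply: Hh_rl => //; rewrite t0 t1.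
  + by move=> a Aa; rewrite Hh0.
  + by move=> a /rlP [a0 _ _ _]; rewrite Hh1.
- exists (fun z : R * {ptws T -> R} => z.2); split; [|split; [|split]].
  + by apply: continuous_subspaceT => z; exact: cvg_snd.
  + by [].
  + by move=> a Aa /=; rewrite (@push_fix R T le F r rF r_fix a Aa).
  + by [].
Qed.

End Mg.
Import Mg.

Module Mh.
Import Order.TTheory.
Section H.
Variables (d : Order.disp_t) (P : finPOrderType d) (X : diagram P) (p : P).
Hypothesis p_max : forall q : P, (q <= p)%O.

Local Notation hle := (hocolim_le X).

Lemma h_refl : reflexive hle.
Proof. by case=> q a; rewrite /hocolim_le /= lexx dmap_id dle_refl. Qed.

Lemma h_anti : antisymmetric hle.
Proof.
case=> q a [q' b]; rewrite /hocolim_le /= => /andP[/andP[h1 h2] /andP[h3 h4]].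
have e : q = q' by apply/le_anti; rewrite h1 h3.
subst q'; rewrite !dmap_id in h2 h4.
by rewrite (dle_anti _ _ _ _ a b) ?h2 ?h4.
Qed.

Lemma h_trans : transitive hle.
Proof.
case=> qy b [qx a] [qz c]; rewrite /hocolim_le /= => /andP[hxy dxy] /andP[hyz dyz].
rewrite (le_trans hxy hyz) /= -(dmap_comp _ _ _ _ _ _ hxy hyz).
exact: (dle_trans _ _ _ _ _ _ _ (dmap_mono _ _ _ _ _ hyz _ _ dxy) dyz).
Qed.

Definition rr (x : hocolim_carrier X) : hocolim_carrier X :=
  existT _ p (dmap X (tag x) p (tagged x)).

Lemma rrF x : rr x \in fiber X p.
Proof. by rewrite inE /= eqxx. Qed.

Lemma le_rr x : hle x (rr x).
Proof. by case: x => q a; rewrite /hocolim_le /= p_max dle_refl. Qed.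

Lemma rr_mono x y : hle x y -> hle (rr x) (rr y).
Proof.
case: x => qx a; case: y => qy b; rewrite /hocolim_le /= => /andP[h dd].
rewrite lexx dmap_id /= -(dmap_comp _ _ _ _ _ _ h (p_max qy)).
exact: dmap_mono.
Qed.

Lemma rr_fix x : x \in fiber X p -> rr x = x.
Proof. by case: x => q a; rewrite inE /= => /eqP e; subst q; rewrite /rr /= dmap_id. Qed.

Lemma rr_up x y : y \in fiber X p -> hle x y -> hle (rr x) y.
Proof.
case: x => qx a; case: y => qy b; rewrite inE /= => /eqP e; subst qy.
by rewrite /hocolim_le /= => /andP[_ dd]; rewrite lexx dmap_id.
Qed.
End H.


End Mh.
Import Mh.

Theorem corollary2p5 (d : Order.disp_t) (P : finPOrderType d)
  (X : diagram P) (p : P) (p_max : forall q : P, (q <= p)%O) :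
  collapses (hocolim_le X) [set: hocolim_carrier X] (fiber X p) /\
  weak_equivalent (hocolim_le X) (hocolim_le X)
    [set: hocolim_carrier X] (fiber X p).
Proof.
split.
  apply: (@collapse_gen _ _ (@h_refl _ _ X) (@h_anti _ _ X) (@h_trans _ _ X)
     (fiber X p) (@rr _ _ X p) (@rrF _ _ X p) (@le_rr _ _ X p p_max) (@rr_up _ _ X p) #|[set: hocolim_carrier X]|) => //.
exact: (@weq_gen _ _ (@h_refl _ _ X) (@h_anti _ _ X) (@h_trans _ _ X) _ _
   (@rrF _ _ X p) (@le_rr _ _ X p p_max) (@rr_mono _ _ X p p_max) (@rr_fix _ _ X p)).
Qed.
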